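(* Let $p,q,e$ be positive integers and $\mathbf{C}=\begin{bmatrix}1 & p\\ q & 1+pq\end{bmatrix}$. The least period of the Cat map over $\mathbb{Z}_{2^e}$ is $T$ if and only if $T$ is the minimum positive integer $n$ satisfying $$\tfrac12 G_n\equiv 1 \pmod{2^e}\quad\text{and}\quad H_n\equiv 0\pmod{2^{e-h_e}},$$ where $$h_e=\begin{cases}-1 & \text{if } e_p+e_q=0;\\ \min(e_p,e_q) & \text{if } e>\min(e_p,e_q),\ e_p+e_q\ne 0;\\ e & \text{if } e\le \min(e_p,e_q),\end{cases}$$ $e_p=\max\{x: 2^x\mid p\}$ and $e_q=\max\{x: 2^x\mid q\}$.
   Context: The Cat map over $\mathbb{Z}_{2^e}$ is $v\mapsto \mathbf{C}v\bmod 2^e$ on $\mathbb{Z}_{2^e}^2$; its least period is the least positive integer $n$ with $\mathbf{C}^nv\equiv v\pmod{2^e}$ for all $v$. Put $A=pq+2$, $B=\sqrt{A^2-4}$, $G_n=\left(\frac{A+B}{2}\right)^n+\left(\frac{A-B}{2}\right)^n$, $H_n=\frac{1}{B}\left(\left(\frac{A+B}{2}\right)^n-\left(\frac{A-B}{2}\right)^n\right)$ (integers). The congruence $\frac12 G_n\equiv 1\pmod{2^e}$ is understood to require that $\frac12 G_n$ be an integer. *)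

(* Defs.v *)
From mathcomp Require Import all_boot all_order all_algebra.
Set Implicit Arguments. Unset Strict Implicit. Unset Printing Implicit Defensive.
Import GRing.Theory.
Local Open Scope ring_scope.

Definition catC (m p q : nat) : 'M['Z_m]_2 :=
  \matrix_(i < 2, j < 2)
    if (i : nat) == 0%N then (if (j : nat) == 0%N then 1 else p%:R)
    else (if (j : nat) == 0%N then q%:R else (1 + p * q)%N%:R).

Definition cat_fixes (m p q n : nat) : Prop :=
  forall v : 'cV['Z_m]_2, (catC m p q ^+ n) *m v = v.

Definition is_least_pos (P : nat -> Prop) (T : nat) : Prop :=
  (0 < T)%N /\ P T /\ forall n, (0 < n)%N -> P n -> (T <= n)%N.

Definition cat_least_period (e p q T : nat) : Prop :=
  is_least_pos (cat_fixes (2 ^ e) p q) T.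

Fixpoint lucas_pair (A x0 x1 : int) (n : nat) : int * int :=
  match n with
  | 0%N => (x0, x1)
  | n'.+1 => lucas_pair A x1 (A * x1 - x0) n'
  end.

Definition catA (p q : nat) : int := (p * q + 2)%N%:Z.

(* G_n = alpha^n + beta^n, H_n = (alpha^n - beta^n)/B, alpha,beta = (A +- B)/2
   roots of x^2 - A x + 1 *)
Definition Gn (p q n : nat) : int := (lucas_pair (catA p q) 2 (catA p q) n).1.
Definition Hn (p q n : nat) : int := (lucas_pair (catA p q) 0 1 n).1.

Definition h_exp (e p q : nat) : int :=
  let ep := logn 2 p in let eq := logn 2 q in
  if (ep + eq == 0)%N then -1
  else if (minn ep eq < e)%N then (minn ep eq)%:Z
  else e%:Z.

Definition GH_cond (e p q n : nat) : Prop :=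
  [/\ (2 %| Gn p q n)%Z,
      ((Gn p q n %/ 2)%Z = 1 %[mod (2 ^ e)%N%:Z])%Z &
      (Hn p q n = 0 %[mod (2 ^ `|e%:Z - h_exp e p q|)%N%:Z])%Z].

(* Main.v *)
From mathcomp Require Import all_boot all_order all_algebra.
From mathcomp Require Import ring lra zify.
Require Import Defs.
Import GRing.Theory.
Local Open Scope ring_scope.

Lemma lp_step A x0 x1 n : lucas_pair A x0 x1 n.+1 =
  ((lucas_pair A x0 x1 n).2, A * (lucas_pair A x0 x1 n).2 - (lucas_pair A x0 x1 n).1).
Proof. by elim: n x0 x1 => [|n IH] x0 x1 //; exact: IH. Qed.

Lemma Hn_rec p q n : Hn p q n.+2 = catA p q * Hn p q n.+1 - Hn p q n.
Proof. by rewrite /Hn !lp_step /=. Qed.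
Lemma Gn_rec p q n : Gn p q n.+2 = catA p q * Gn p q n.+1 - Gn p q n.
Proof. by rewrite /Gn !lp_step /=. Qed.
Lemma Hn0 p q : Hn p q 0 = 0. Proof. by []. Qed.
Lemma Hn1 p q : Hn p q 1 = 1. Proof. by []. Qed.
Lemma Gn0 p q : Gn p q 0 = 2. Proof. by []. Qed.
Lemma Gn1 p q : Gn p q 1 = catA p q. Proof. by []. Qed.

Lemma GH_rel p q n : Gn p q n.+1 = catA p q * Hn p q n.+1 - 2 * Hn p q n.
Proof.
suff : (Gn p q n.+1 = catA p q * Hn p q n.+1 - 2 * Hn p q n) /\
       (Gn p q n.+2 = catA p q * Hn p q n.+2 - 2 * Hn p q n.+1) by case.
elim: n => [|n [IH1 IH2]].
  by rewrite Gn_rec Hn_rec !Gn1 Gn0 !Hn1 Hn0; split; ring.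
split => //; rewrite Gn_rec IH1 IH2 !Hn_rec; ring.
Qed.

Lemma Hn_inv p q n :
  Hn p q n.+1 ^+ 2 - catA p q * Hn p q n.+1 * Hn p q n + Hn p q n ^+ 2 = 1.
Proof.
elim: n => [|n IH]; first by rewrite Hn1 Hn0; ring.
by rewrite Hn_rec -IH; ring.
Qed.

Lemma Zp_intr0 m (x : int) : (1 < m)%N -> ((x%:~R : 'Z_m) = 0) <-> (m%:Z %| x)%Z.
Proof.
move=> m1; case: x => n.
- split => H.
  + have := congr1 val H; rewrite /= val_Zp_nat //= => H1.
    rewrite /dvdz /= /dvdn; apply/eqP; exact: H1.
  + apply: val_inj; rewrite /= val_Zp_nat //; exact/eqP.
- rewrite NegzE mulrNz; split => H.
  + have {}H : (n.+1%:R : 'Z_m) = 0 by apply/eqP; rewrite -oppr_eq0 H.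
    have := congr1 val H; rewrite /= val_Zp_nat //= => H1.
    rewrite /dvdz /= /dvdn; apply/eqP; exact: H1.
  + apply/eqP; rewrite oppr_eq0; apply/eqP.
    apply: val_inj; rewrite /= val_Zp_nat //; exact/eqP.
Qed.

Lemma Zp_intr_eq m (x y : int) : (1 < m)%N ->
  ((x%:~R : 'Z_m) = y%:~R) <-> (m%:Z %| x - y)%Z.
Proof.
move=> m1; rewrite -Zp_intr0 // intrB; split => [->|/eqP]; first by rewrite subrr.
by rewrite subr_eq0 => /eqP.
Qed.

Lemma Pz_intr (R : pzRingType) n : ((n%:Z)%:~R : R) = n%:R.
Proof. by []. Qed.

Definition Mx m (p q : nat) (h g : int) : 'M['Z_m]_2 :=
  \matrix_(i < 2, j < 2)
    (if (i : nat) == 0%N then (if (j : nat) == 0%N then h - g else p%:Z * h)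
    else (if (j : nat) == 0%N then q%:Z * h else (1 + p%:Z * q%:Z) * h - g))%:~R.

Lemma catC_pow m p q n : catC m p q ^+ n.+1 = Mx m p q (Hn p q n.+1) (Hn p q n).
Proof.
elim: n => [|n IH].
  rewrite expr1; apply/matrixP => i j; rewrite !mxE Hn1 Hn0.
  case: i => [[|[|//]] Hi]; case: j => [[|[|//]] Hj] /=.
  all: rewrite ?(intrM, intrD, intrB, intrN, Pz_intr, natrD, natrM) /=; try ring.
rewrite exprSr IH; apply/matrixP => i j; rewrite !mxE !big_ord_recl big_ord0 !mxE /=.
rewrite Hn_rec /catA.
case: i => [[|[|//]] Hi]; case: j => [[|[|//]] Hj] /=.
  all: rewrite ?(intrM, intrD, intrB, intrN, Pz_intr, natrD, natrM) /=; try ring.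
Qed.

Lemma Zp_intr1 m (x : int) : (1 < m)%N ->
  ((x%:~R : 'Z_m) = 1) <-> (m%:Z %| x - 1)%Z.
Proof. by move=> m1; have := Zp_intr_eq m x 1 m1; rewrite mulr1z. Qed.

Lemma fixes_iff m p q n : (1 < m)%N ->
  cat_fixes m p q n.+1 <->
  [/\ (m%:Z %| Hn p q n.+1 - Hn p q n - 1)%Z,
      (m%:Z %| p%:Z * Hn p q n.+1)%Z,
      (m%:Z %| q%:Z * Hn p q n.+1)%Z &
      (m%:Z %| (1 + p%:Z * q%:Z) * Hn p q n.+1 - Hn p q n - 1)%Z].
Proof.
move=> m1; rewrite /cat_fixes catC_pow; split.
- move=> H.
  have E : forall i j, Mx m p q (Hn p q n.+1) (Hn p q n) i j = (i == j)%:R.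
    move=> i j; have := H (delta_mx j 0); move/matrixP/(_ i 0).
    rewrite !mxE !big_ord_recl big_ord0 !mxE /=.
    case: i => [[|[|//]] Hi]; case: j => [[|[|//]] Hj] /=;
      rewrite ?mulr0 ?mulr1 ?addr0 ?add0r //.
  have E00 := E 0 0; have E01 := E 0 1; have E10 := E 1 0; have E11 := E 1 1.
  rewrite !mxE /= in E00 E01 E10 E11.
  split.
  + by apply/(Zp_intr1 m _ m1).
  + by apply/(Zp_intr0 m _ m1).
  + by apply/(Zp_intr0 m _ m1).
  + by apply/(Zp_intr1 m _ m1).
- case=> H1 H2 H3 H4 v.
  suff -> : Mx m p q (Hn p q n.+1) (Hn p q n) = 1 by rewrite mul1mx.
  apply/matrixP => i j; rewrite !mxE.
  case: i => [[|[|//]] Hi]; case: j => [[|[|//]] Hj] /=.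
  + exact/(Zp_intr1 m _ m1).
  + exact/(Zp_intr0 m _ m1).
  + exact/(Zp_intr0 m _ m1).
  + exact/(Zp_intr1 m _ m1).
Qed.

Lemma dvd_lin (d x y u : int) : (d %| y)%Z -> x = d * u + y -> (d %| x)%Z.
Proof. by move=> Hy ->; apply: rpredD => //; apply: dvdz_mulr; exact: dvdzz. Qed.

Lemma dvd_ex (d x u : int) : x = d * u -> (d %| x)%Z.
Proof. by move=> ->; apply: dvdz_mulr; exact: dvdzz. Qed.

Lemma pow2_neq0 k : (2 : int) ^+ k != 0.
Proof. by rewrite expf_neq0. Qed.

Lemma dvd_split (k e : nat) (x : int) : (k <= e)%N ->
  ((2 : int) ^+ e %| 2 ^+ k * x)%Z = (2 ^+ (e - k) %| x)%Z.
Proof.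
move=> ke; rewrite -{1}(subnKC ke) exprD dvdz_mul2l //; exact: pow2_neq0.
Qed.

Lemma dvd_odd (k u : nat) (x : int) : coprime 2 u ->
  ((2 : int) ^+ k %| u%:Z * x)%Z = (2 ^+ k %| x)%Z.
Proof.
move=> cu; rewrite Gauss_dvdzr // /coprimez /gcdz abszX /=; exact: coprimeXl.
Qed.

Lemma div2K (w : int) : ((2 * w) %/ 2)%Z = w.
Proof. by rewrite mulKz. Qed.

Lemma sub_zero (x y z : int) : z = 0 -> x - y = z -> x = y.
Proof. by move=> -> /eqP; rewrite subr_eq0 => /eqP. Qed.

Arguments sub_zero {x y z}.
Arguments dvd_lin {d x y u}.
Arguments dvd_ex {d x u}.

Lemma pexpD (a d : nat) : (2 : int) ^+ (a + d) = 2 ^+ a * 2 ^+ d.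
Proof. exact: exprD. Qed.

Lemma core (e a b p' q' : nat) (h g : int) :
  (0 < e)%N -> (a <= b)%N -> coprime 2 p' -> coprime 2 q' ->
  h ^+ 2 - (p'%:Z * 2 ^+ a * (q'%:Z * 2 ^+ b) + 2) * h * g + g ^+ 2 = 1 ->
  ([/\ (2 ^+ e %| h - g - 1)%Z, (2 ^+ e %| p'%:Z * 2 ^+ a * h)%Z,
       (2 ^+ e %| q'%:Z * 2 ^+ b * h)%Z &
       (2 ^+ e %| (1 + p'%:Z * 2 ^+ a * (q'%:Z * 2 ^+ b)) * h - g - 1)%Z] <->
   [/\ (2 %| (p'%:Z * 2 ^+ a * (q'%:Z * 2 ^+ b) + 2) * h - 2 * g)%Z,
       (2 ^+ e %| (((p'%:Z * 2 ^+ a * (q'%:Z * 2 ^+ b) + 2) * h - 2 * g) %/ 2)%Z - 1)%Z &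
       (2 ^+ (if (a + b == 0)%N then e.+1 else if (a < e)%N then (e - a)%N else 0%N) %| h)%Z]).
Proof.
move=> e0 ab cp cq Hinv.
case: (boolP (a + b == 0)%N) => [ab0 | abn0].
-
  have a0 : a = 0%N by lia.
  have b0 : b = 0%N by lia.
  subst a b; rewrite !expr0 !mulr1 in Hinv *.
  have oddA : coprimez 2 (p'%:Z * q'%:Z + 2).
    rewrite /coprimez /gcdz /=; change (coprime 2 (p' * q' + 2)); rewrite coprime2n oddD oddM.
    by rewrite -!coprime2n cp cq.
  split.
  + case=> H1 H2 H3 H4.
    move: H2; rewrite dvd_odd // => /dvdzP [k Hk].
    have H1' := H1; move/dvdzP: H1' => [j Hj].
    have Eg : g = h - 1 - j * 2 ^+ e by rewrite -Hj; ring.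
    have key : 2 ^+ e * ((p'%:Z * q'%:Z + 2) * k - 2 * (k - j) +
        2 ^+ e * (k ^+ 2 + (k - j) ^+ 2 - (p'%:Z * q'%:Z + 2) * k * (k - j)))
        = (h ^+ 2 - (p'%:Z * q'%:Z + 2) * h * g + g ^+ 2) - 1.
      by rewrite Eg Hk; ring.
    rewrite Hinv subrr in key.
    move/eqP: key; rewrite mulf_eq0 (negbTE (pow2_neq0 e)) /= => /eqP key.
    case: e e0 Hk Hj Eg H1 H3 H4 key => [//|e1] _ Hk Hj Eg H1 H3 H4 key.
    have : (2 %| k * (p'%:Z * q'%:Z + 2))%Z.
      apply: (dvd_ex (u := (k - j) - 2 ^+ e1 * (k ^+ 2 + (k - j) ^+ 2 - (p'%:Z * q'%:Z + 2) * k * (k - j)))).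
      apply: (sub_zero key); rewrite [2 ^+ e1.+1]exprS; ring.
    rewrite Gauss_dvdzl // => /dvdzP [k2 Hk2].
    have Eh : h = k2 * 2 ^+ e1.+2 by rewrite Hk Hk2 [2 ^+ e1.+2]exprS; ring.
    have EG : (p'%:Z * q'%:Z + 2) * h - 2 * g = 2 * ((p'%:Z * q'%:Z + 2) * k2 * 2 ^+ e1.+1 - g).
      by rewrite Eh [2 ^+ e1.+2]exprS; ring.
    rewrite EG div2K; split.
    * exact: dvd_ex.
    * apply: (dvd_lin (u := p'%:Z * q'%:Z * k2) H1); rewrite Eh [2 ^+ e1.+2]exprS; ring.
    * by apply/dvdzP; exists k2.
  + case=> G1 G2 /dvdzP [k Hk].
    have EG : (p'%:Z * q'%:Z + 2) * h - 2 * g = 2 * ((p'%:Z * q'%:Z + 2) * k * 2 ^+ e - g).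
      by rewrite Hk [2 ^+ e.+1]exprS; ring.
    rewrite EG div2K in G2.
    have H1 : (2 ^+ e %| h - g - 1)%Z.
      apply: (dvd_lin (u := - (p'%:Z * q'%:Z * k)) G2); rewrite Hk [2 ^+ e.+1]exprS; ring.
    split => //.
    * apply: (dvd_ex (u := p'%:Z * 2 * k)); rewrite Hk [2 ^+ e.+1]exprS; ring.
    * apply: (dvd_ex (u := q'%:Z * 2 * k)); rewrite Hk [2 ^+ e.+1]exprS; ring.
    * apply: (dvd_lin (u := p'%:Z * q'%:Z * 2 * k) H1); rewrite Hk [2 ^+ e.+1]exprS; ring.
case: (ltnP a e) => [ae | ea].
-
  case: b ab abn0 Hinv => [|b1] ab abn0 Hinv; first by rewrite addn0 in abn0; move: ab; rewrite leqn0 (negbTE abn0).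
  have Ee : (2 : int) ^+ e = 2 ^+ a * 2 ^+ (e - a) by rewrite -exprD subnKC // ltnW.
  have Eb : (2 : int) ^+ b1.+1 = 2 ^+ a * 2 ^+ (b1.+1 - a) by rewrite -exprD subnKC.
  have EG : forall k, h = k * 2 ^+ (e - a) ->
     (p'%:Z * 2 ^+ a * (q'%:Z * 2 ^+ b1.+1) + 2) * h - 2 * g =
     2 * (p'%:Z * q'%:Z * 2 ^+ a * 2 ^+ b1 * k * 2 ^+ (e - a) + h - g).
    by move=> k Hk; rewrite Hk [2 ^+ b1.+1]exprS; ring.
  split.
  + case=> H1 H2 H3 H4.
    move: H2; rewrite (_ : p'%:Z * 2 ^+ a * h = 2 ^+ a * (p'%:Z * h)); last by ring.
    rewrite dvd_split; last exact: ltnW.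
    rewrite dvd_odd // => H2.
    have H2' := H2; move/dvdzP: H2' => [k Hk].
    rewrite (EG k Hk) div2K; split => //.
    * exact: dvd_ex.
    * apply: (dvd_lin (u := p'%:Z * q'%:Z * 2 ^+ b1 * k) H1); rewrite Hk Ee; ring.
  + case=> G1 G2 G3; have G3' := G3; move/dvdzP: G3' => [k Hk].
    rewrite (EG k Hk) div2K in G2.
    have H1 : (2 ^+ e %| h - g - 1)%Z.
      by apply: (dvd_lin (u := - (p'%:Z * q'%:Z * 2 ^+ b1 * k)) G2); rewrite Hk Ee; ring.
    split => //.
    * by apply: (dvd_ex (u := p'%:Z * k)); rewrite Hk Ee; ring.
    * by apply: (dvd_ex (u := q'%:Z * 2 ^+ (b1.+1 - a) * k)); rewrite Hk Ee Eb; ring.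
    * by apply: (dvd_lin (u := p'%:Z * q'%:Z * 2 ^+ b1.+1 * k) H1); rewrite Hk Ee; ring.
-
  rewrite expr0.
  have Ea : (2 : int) ^+ a = 2 ^+ e * 2 ^+ (a - e) by rewrite -exprD subnKC.
  have Eb : (2 : int) ^+ b = 2 ^+ e * 2 ^+ (b - e).
    by rewrite -exprD subnKC //; apply: leq_trans ea ab.
  case: e e0 Ea Eb ea => [//|e1] _ Ea Eb ea.
  have EG : (p'%:Z * 2 ^+ a * (q'%:Z * 2 ^+ b) + 2) * h - 2 * g =
     2 * (p'%:Z * q'%:Z * 2 ^+ e1 * 2 ^+ e1.+1 * 2 ^+ (a - e1.+1) * 2 ^+ (b - e1.+1) * h + h - g).
    by rewrite Ea Eb [2 ^+ e1.+1]exprS; ring.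
  rewrite EG div2K; split.
  + case=> H1 H2 H3 H4; split.
    * exact: dvd_ex.
    * by apply: (dvd_lin (u := p'%:Z * q'%:Z * 2 ^+ e1 * 2 ^+ (a - e1.+1) * 2 ^+ (b - e1.+1) * h) H1); ring.
    * exact: dvd1z.
  + case=> G1 G2 _.
    have H1 : (2 ^+ e1.+1 %| h - g - 1)%Z.
      by apply: (dvd_lin (u := - (p'%:Z * q'%:Z * 2 ^+ e1 * 2 ^+ (a - e1.+1) * 2 ^+ (b - e1.+1) * h)) G2); ring.
    split => //.
    * by apply: (dvd_ex (u := p'%:Z * 2 ^+ (a - e1.+1) * h)); rewrite Ea; ring.
    * by apply: (dvd_ex (u := q'%:Z * 2 ^+ (b - e1.+1) * h)); rewrite Eb; ring.
    * by apply: (dvd_lin (u := p'%:Z * 2 ^+ a * q'%:Z * 2 ^+ (b - e1.+1) * h) H1); rewrite Eb; ring.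
Qed.

Lemma PoszX2 k : ((2 ^ k)%N%:Z) = (2 : int) ^+ k.
Proof. by elim: k => // k IH; rewrite expnS PoszM IH exprS. Qed.

Lemma modz_dvd (x y d : int) : (x = y %[mod d])%Z <-> (d %| x - y)%Z.
Proof. by split => [H|]; [rewrite -eqz_mod_dvd H | rewrite -eqz_mod_dvd => /eqP]. Qed.

Lemma h_exp_sym e p q : h_exp e p q = h_exp e q p.
Proof. by rewrite /h_exp addnC minnC. Qed.

Lemma h_exp_abs e a b p q : a = logn 2 p -> b = logn 2 q -> (a <= b)%N ->
  `|e%:Z - h_exp e p q|%N =
  (if (a + b == 0)%N then e.+1 else if (a < e)%N then (e - a)%N else 0%N).
Proof.
move=> Ea Eb ab; rewrite /h_exp /= -Ea -Eb (minn_idPl ab).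
case: ifP => _; first by lia.
case: ifP => H; lia.
Qed.

Lemma core2 e p q h g : (0 < e)%N -> (0 < p)%N -> (0 < q)%N ->
  h ^+ 2 - (p%:Z * q%:Z + 2) * h * g + g ^+ 2 = 1 ->
  [/\ (2 ^+ e %| h - g - 1)%Z, (2 ^+ e %| p%:Z * h)%Z, (2 ^+ e %| q%:Z * h)%Z &
      (2 ^+ e %| (1 + p%:Z * q%:Z) * h - g - 1)%Z] <->
  [/\ (2 %| (p%:Z * q%:Z + 2) * h - 2 * g)%Z,
      (2 ^+ e %| (((p%:Z * q%:Z + 2) * h - 2 * g) %/ 2)%Z - 1)%Z &
      (2 ^+ `|e%:Z - h_exp e p q|%N %| h)%Z].
Proof.
move=> e0.
wlog ab : p q / (logn 2 p <= logn 2 q)%N.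
  move=> W p0 q0 Hi; case: (leqP (logn 2 p) (logn 2 q)) => H; first exact: W.
  rewrite h_exp_sym [p%:Z * q%:Z]mulrC in Hi *.
  have [W1 W2] := W q p (ltnW H) q0 p0 Hi.
  split => [[? ? ? ?]|X]; first by apply: W1; split.
  by case: (W2 X) => *; split.
move=> p0 q0 Hi.
have [p' cp Ep] := pfactor_coprime (isT : prime 2) p0.
have [q' cq Eq] := pfactor_coprime (isT : prime 2) q0.
rewrite (h_exp_abs e _ _ p q (erefl _) (erefl _) ab).
have Ep' : p%:Z = p'%:Z * 2 ^+ (logn 2 p) by rewrite -PoszX2 -PoszM -Ep.
have Eq' : q%:Z = q'%:Z * 2 ^+ (logn 2 q) by rewrite -PoszX2 -PoszM -Eq.
rewrite Ep' Eq' in Hi *.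
exact: core.
Qed.

Lemma catAE p q : catA p q = p%:Z * q%:Z + 2.
Proof. by rewrite /catA PoszD PoszM. Qed.

Lemma key e p q n : (0 < e)%N -> (0 < p)%N -> (0 < q)%N -> (0 < n)%N ->
  cat_fixes (2 ^ e) p q n <-> GH_cond e p q n.
Proof.
move=> e0 p0 q0; case: n => [//|n] _.
have m1 : (1 < 2 ^ e)%N by rewrite -{1}(expn0 2) ltn_exp2l.
have Hi := Hn_inv p q n; rewrite catAE in Hi.
rewrite fixes_iff // PoszX2.
apply: (iff_trans (core2 _ _ _ _ _ e0 p0 q0 Hi)).
rewrite /GH_cond GH_rel catAE.
split => [[A B C]|[A B C]]; split => //.
- by apply/modz_dvd; rewrite PoszX2.
- by apply/modz_dvd; rewrite subr0 PoszX2.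
- by move/modz_dvd: B; rewrite PoszX2.
- by move/modz_dvd: C; rewrite subr0 PoszX2.
Qed.

Lemma least_iff (P Q : nat -> Prop) T :
  (forall n, (0 < n)%N -> P n <-> Q n) -> is_least_pos P T <-> is_least_pos Q T.
Proof.
move=> H; split => [[T0 [PT M]]|[T0 [QT M]]]; split => //; split.
- by apply/H.
- by move=> n n0 Qn; apply: M => //; apply/H.
- by apply/H.
- by move=> n n0 Pn; apply: M => //; apply/H.
Qed.

Theorem proposition3 (p q e : nat) :
  (0 < p)%N -> (0 < q)%N -> (0 < e)%N ->
  forall T : nat,
    cat_least_period e p q T <-> is_least_pos (GH_cond e p q) T.
Proof.
move=> p0 q0 e0 T; apply: least_iff => n n0; exact: key.
Qed.
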